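(* A real sequence (finite or infinite) is relative convex if and only if it is strictly V-shaped.
   Context: For a real sequence $(x_i)$, $\Delta x_i=x_{i+1}-x_i$. ''Increasing'' means strictly increasing. A real sequence $a=(a_i)$ is relative convex if there exists an increasing real sequence $t=(t_i)$ with the same index set such that $(\Delta a_i/\Delta t_i)$ is non-decreasing. A sequence is strictly V-shaped if it falls into one of the following cases: (1) strictly monotonic; (2) strictly decreasing and then constant; (3) constant and then strictly increasing; (4) strictly decreasing and then strictly increasing; (5) strictly decreasing, then constant, then strictly increasing. Equivalently, there are indices $m\le M$ (allowed to be $+\infty$ for infinite sequences) such that $a_1>a_2>\dots>a_m=a_{m+1}=\dots=a_M<a_{M+1}<\cdots$. *)

(* Defs.v *)
From Stdlib Require Import Reals.
Open Scope R_scope.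

(* Index sets of real sequences (0-based):
   [Some n] is the finite index set {0, ..., n-1};
   [None]   is the infinite index set {0, 1, 2, ...}. *)
Definition inI (N : option nat) (i : nat) : Prop :=
  match N with None => True | Some n => (i < n)%nat end.

(* Extended natural numbers nat ∪ {+oo}, encoded as option nat (None = +oo). *)
Definition le_ext (k : nat) (m : option nat) : Prop :=
  match m with None => True | Some m => (k <= m)%nat end.

Definition le_ext2 (m M : option nat) : Prop :=
  match m, M with
  | _, None => True
  | None, Some _ => False
  | Some m, Some M => (m <= M)%nat
  end.

Definition Delta (x : nat -> R) (i : nat) : R := x (S i) - x i.

Definition increasing_on (N : option nat) (t : nat -> R) : Prop :=
  forall i j, inI N i -> inI N j -> (i < j)%nat -> t i < t j.

Definition relative_convex (N : option nat) (a : nat -> R) : Prop :=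
  exists t : nat -> R, increasing_on N t /\
    forall i, inI N (S (S i)) ->
      Delta a i / Delta t i <= Delta a (S i) / Delta t (S i).

(* Strictly V-shaped (0-based version of the characterization
   a_1 > ... > a_m = ... = a_M < a_{M+1} < ..., with m <= M in nat ∪ {+oo}):
   for consecutive indices i, i+1:
     i+1 <= m        -> a_i > a_{i+1},
     m <= i, i+1 <= M -> a_i = a_{i+1},
     M <= i          -> a_i < a_{i+1}. *)
Definition strictly_V_shaped (N : option nat) (a : nat -> R) : Prop :=
  exists m M : option nat, le_ext2 m M /\
    forall i, inI N (S i) ->
      (le_ext (S i) m -> a i > a (S i)) /\
      ((~ le_ext (S i) m) -> le_ext (S i) M -> a i = a (S i)) /\
      ((~ le_ext (S i) M) -> a i < a (S i)).

(* Main.v *)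
Require Import Defs.
From Stdlib Require Import Reals.
Open Scope R_scope.
From Stdlib Require Import Lra Lia Psatz Classical Arith Wf_nat.

Lemma least_ex (P : nat -> Prop) :
  (exists n, P n) -> exists n, P n /\ forall k, P k -> (n <= k)%nat.
Proof.
  intros [n Hn]. revert Hn. induction n as [n IH] using (well_founded_induction lt_wf).
  intros Hn. destruct (classic (exists k, (k < n)%nat /\ P k)) as [[k [Hk Pk]]|H].
  - exact (IH k Hk Pk).
  - exists n. split; auto. intros k Pk. destruct (le_lt_dec n k); auto.
    exfalso; apply H; eauto.
Qed.

Lemma inI_le N i j : (i <= j)%nat -> inI N j -> inI N i.
Proof. destruct N; simpl; auto; lia. Qed.

Lemma div_sign x d : d > 0 -> x = (x / d) * d.
Proof. intros; field; lra. Qed.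

Section RC.
Variables (N : option nat) (a t : nat -> R).
Hypothesis Ht : increasing_on N t.
Hypothesis Hs : forall i, inI N (S (S i)) ->
      Defs.Delta a i / Defs.Delta t i <= Defs.Delta a (S i) / Defs.Delta t (S i).

Lemma dt_pos i : inI N (S i) -> Defs.Delta t i > 0.
Proof. intros H. unfold Defs.Delta. pose proof (Ht i (S i) (inI_le N i (S i) ltac:(lia) H) H).
  assert (t i < t (S i)) by (apply H0; lia). lra. Qed.

Definition sl i := Defs.Delta a i / Defs.Delta t i.

Lemma sl_mono k : forall i, inI N (S (i + k)) -> sl i <= sl (i + k).
Proof.
  induction k; intros i H.
  - rewrite Nat.add_0_r; lra.
  - eapply Rle_trans. apply IHk. apply (inI_le N (S (i+k)) (S (i + S k)) ltac:(lia) H).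
    replace (i + S k)%nat with (S (i + k)) by lia. apply Hs.
    replace (S (S (i+k))) with (S (i + S k)) by lia. exact H.
Qed.

Lemma sl_mono' i j : (i <= j)%nat -> inI N (S j) -> sl i <= sl j.
Proof. intros. replace j with (i + (j - i))%nat by lia. apply sl_mono.
  replace (i + (j - i))%nat with j by lia. auto. Qed.

Lemma sgn_nonneg i : inI N (S i) -> Defs.Delta a i >= 0 <-> sl i >= 0.
Proof. intros H. pose proof (dt_pos i H). unfold sl.
  rewrite (div_sign (Defs.Delta a i) (Defs.Delta t i) H0) at 1. split; intros; nra. Qed.

Lemma sgn_pos i : inI N (S i) -> Defs.Delta a i > 0 <-> sl i > 0.
Proof. intros H. pose proof (dt_pos i H). unfold sl.
  rewrite (div_sign (Defs.Delta a i) (Defs.Delta t i) H0) at 1. split; intros; nra. Qed.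

Lemma rc_to_v : strictly_V_shaped N a.
Proof.
  destruct (classic (exists i, inI N (S i) /\ Defs.Delta a i >= 0)) as [HA|HA].
  - destruct (least_ex _ HA) as [m0 [[Hm0 Pm0] Lm0]].
    destruct (classic (exists i, inI N (S i) /\ Defs.Delta a i > 0)) as [HB|HB].
    + destruct (least_ex _ HB) as [M0 [[HM0 PM0] LM0]].
      assert (mM : (m0 <= M0)%nat) by (apply Lm0; split; auto; lra).
      exists (Some m0), (Some M0). simpl. split; [exact mM|].
      intros i Hi. split; [|split].
      * intros Hle. destruct (Rlt_le_dec (Defs.Delta a i) 0) as [h|h].
        -- unfold Defs.Delta in h; lra.
        -- assert (m0 <= i)%nat by (apply Lm0; split; auto; lra). lia.
      * intros H1 H2. assert (m0 <= i)%nat by lia.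
        assert (Defs.Delta a i >= 0).
        { apply sgn_nonneg; auto. apply sgn_nonneg in Pm0; auto.
          pose proof (sl_mono' m0 i H Hi). lra. }
        destruct (Rle_lt_dec (Defs.Delta a i) 0) as [h|h].
        -- unfold Defs.Delta in *; lra.
        -- assert (M0 <= i)%nat by (apply LM0; split; auto). lia.
      * intros H1. assert (M0 <= i)%nat by lia.
        assert (Defs.Delta a i > 0).
        { apply sgn_pos; auto. apply sgn_pos in PM0; auto.
          pose proof (sl_mono' M0 i H Hi). lra. }
        unfold Defs.Delta in *; lra.
    + exists (Some m0), None. simpl. split; [exact I|].
      intros i Hi. split; [|split].
      * intros Hle. destruct (Rlt_le_dec (Defs.Delta a i) 0) as [h|h].
        -- unfold Defs.Delta in h; lra.
        -- assert (m0 <= i)%nat by (apply Lm0; split; auto; lra). lia.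
      * intros H1 _. assert (m0 <= i)%nat by lia.
        assert (Defs.Delta a i >= 0).
        { apply sgn_nonneg; auto. apply sgn_nonneg in Pm0; auto.
          pose proof (sl_mono' m0 i H Hi). lra. }
        destruct (Rle_lt_dec (Defs.Delta a i) 0) as [h|h].
        -- unfold Defs.Delta in *; lra.
        -- exfalso; apply HB; eauto.
      * intros H1; exfalso; apply H1; exact I.
  - exists None, None. simpl. split; [exact I|].
    intros i Hi. split; [|split].
    + intros _. destruct (Rlt_le_dec (Defs.Delta a i) 0) as [h|h].
      * unfold Defs.Delta in h; lra.
      * exfalso; apply HA; exists i; split; auto; lra.
    + intros H1; exfalso; apply H1; exact I.
    + intros H1; exfalso; apply H1; exact I.
Qed.
End RC.

Definition dd (a : nat -> R) (i : nat) : R :=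
  if Req_EM_T (Defs.Delta a i) 0 then 1 else Rabs (Defs.Delta a i).

Fixpoint tt (a : nat -> R) (i : nat) : R :=
  match i with O => 0 | S k => tt a k + dd a k end.

Lemma dd_pos a i : dd a i > 0.
Proof. unfold dd. destruct Req_EM_T. lra. apply Rabs_pos_lt; auto. Qed.

Lemma tt_incr a : forall i k, tt a i < tt a (i + S k).
Proof.
  intros i k; induction k.
  - rewrite Nat.add_1_r. simpl. pose proof (dd_pos a i); lra.
  - replace (i + S (S k))%nat with (S (i + S k)) by lia. simpl.
    pose proof (dd_pos a (i + S k)); lra.
Qed.

Lemma sgn_val a i :
  Defs.Delta a i / dd a i = (if Req_EM_T (Defs.Delta a i) 0 then 0 else
     if Rlt_dec 0 (Defs.Delta a i) then 1 else -1).
Proof.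
  unfold dd. destruct Req_EM_T. rewrite e; field.
  destruct Rlt_dec.
  - rewrite Rabs_right by lra. field; auto.
  - rewrite Rabs_left by lra. field; auto.
Qed.

Lemma v_to_rc N a : strictly_V_shaped N a -> relative_convex N a.
Proof.
  intros [m [M [HmM H]]].
  exists (tt a). split.
  - intros i j _ _ Hij. replace j with (i + S (j - S i))%nat by lia. apply tt_incr.
  - intros i Hi.
    assert (E : forall k, Defs.Delta (tt a) k = dd a k) by (intros; unfold Defs.Delta; simpl; lra).
    rewrite !E, !sgn_val.
    destruct (H i (inI_le N (S i) (S (S i)) ltac:(lia) Hi)) as [A1 [A2 A3]].
    destruct (H (S i) Hi) as [B1 [B2 B3]].
    unfold Defs.Delta.
    destruct (classic (le_ext (S i) m)) as [c1|c1].
    { specialize (A1 c1).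
      destruct Req_EM_T; [lra|]. destruct Rlt_dec; [lra|].
      destruct Req_EM_T; [lra|]. destruct Rlt_dec; lra. }
    destruct (classic (le_ext (S i) M)) as [c2|c2].
    { specialize (A2 c1 c2).
      destruct Req_EM_T; [|lra].
      assert (nm : ~ le_ext (S (S i)) m) by (destruct m; simpl in *; auto; lia).
      destruct (classic (le_ext (S (S i)) M)) as [c3|c3].
      - specialize (B2 nm c3). destruct Req_EM_T; lra.
      - specialize (B3 c3). destruct Req_EM_T; [lra|]. destruct Rlt_dec; lra. }
    specialize (A3 c2).
    assert (nM : ~ le_ext (S (S i)) M) by (destruct M; simpl in *; auto; lia).
    specialize (B3 nM).
    destruct Req_EM_T; [lra|]. destruct Rlt_dec; [|lra].
    destruct Req_EM_T; [lra|]. destruct Rlt_dec; lra.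
Qed.

Theorem theorem2p2 (N : option nat) (a : nat -> R) :
  relative_convex N a <-> strictly_V_shaped N a.
Proof.
  split.
  - intros [t [Ht Hs]]. exact (rc_to_v N a t Ht Hs).
  - apply v_to_rc.
Qed.
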